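(* Let $(X,\mathcal{A},p)$ be a standard Borel probability space. For a sub-$\sigma$-algebra $\mathcal{B}\subseteq\mathcal{A}$ let $\overline{\mathcal{B}}=\{A\in\mathcal{A}:\ p(A\,\triangle\,B)=0\text{ for some }B\in\mathcal{B}\}$. If $(\mathcal{B}_n)_{n\ge0}$ is a sequence of sub-$\sigma$-algebras with $\mathcal{B}_{n+1}\subseteq\mathcal{B}_n$ for all $n$, then $\bigcap_n\overline{\mathcal{B}_n}=\overline{\bigcap_n\mathcal{B}_n}$.
   Context: In the paper $\overline{\mathcal{B}}$ is written $\mathcal{I}_{e_\mathcal{B}}$, the invariant $\sigma$-algebra of the conditional expectation kernel $e_\mathcal{B}(A\mid x)=\mathbb{P}[A\mid\mathcal{B}](x)$; it equals the set of $A\in\mathcal{A}$ almost surely equal to a set in $\mathcal{B}$. *)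

(* Defs.v *)
From HB Require Import structures.
From mathcomp Require Import all_boot all_order all_algebra.
From mathcomp Require Import all_classical all_reals all_analysis.
Set Implicit Arguments. Unset Strict Implicit. Unset Printing Implicit Defensive.
Import Order.TTheory GRing.Theory Num.Theory.
Local Open Scope classical_set_scope.
Local Open Scope ring_scope.

(* A Polish space: a separable, completely metrizable topological space.
   We present it as a complete (pseudo)metric space which is Hausdorff
   (hence metric) and has a countable dense subset. *)
Definition standard_Borel (d : measure_display) (T : measurableType d) : Prop :=
  exists (R : realType) (Y : completePseudoMetricType R),
    hausdorff_space Y /\
    (exists D : set Y, countable D /\ closure D = [set: Y]) /\
    exists f : T -> Y, bijective f /\
      forall A : set T, measurable A <->
        exists B : set Y, <<s [set: Y], open >> B /\ A = f @^-1` B.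

Definition ae_closure (d : measure_display) (T : measurableType d)
  (R : realType) (p : probability T R) (G : set (set T)) : set (set T) :=
  [set A | measurable A /\
     exists B, G B /\ p ((A `\` B) `|` (B `\` A)) = 0%E].

(* Main.v *)
Require Import Defs.
From HB Require Import structures.
From mathcomp Require Import all_boot all_order all_algebra.
From mathcomp Require Import all_classical all_reals all_analysis.
Local Open Scope classical_set_scope.
Local Open Scope ring_scope.

Lemma sa_bigcap (X : Type) (G : set (set X)) (A : (set X)^nat) :
  sigma_algebra [set: X] G -> (forall n, G (A n)) -> G (\bigcap_n A n).
Proof.
move=> hG GA; have [G0 GC GU] := hG.
have -> : \bigcap_n A n = [set: X] `\` \bigcup_n ([set: X] `\` A n).
  rewrite setTD setC_bigcup; apply: eq_bigcapr => n _; by rewrite setTD setCK.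
by apply: (GC); apply: (GU) => n; apply: (GC).
Qed.

Lemma sa_mono (X : Type) (B : nat -> set (set X)) :
  (forall n, B n.+1 `<=` B n) -> forall k j, B (j + k)%N `<=` B k.
Proof.
move=> h k; elim=> [|j IH] //= A HA; apply: IH; apply: h; exact: HA.
Qed.

Theorem proposition4p20 (d : measure_display) (X : measurableType d)
  (R : realType) (p : probability X R) (B : nat -> set (set X)) :
  standard_Borel X ->
  (forall n, sigma_algebra [set: X] (B n) /\ B n `<=` measurable) ->
  (forall n, B n.+1 `<=` B n) ->
  \bigcap_n ae_closure p (B n) = ae_closure p (\bigcap_n B n).
Proof.
move=> _ hB hmono; apply/seteqP; split; last first.
  move=> A [mA [Bb [hBb h0]]] n _; split => //; exists Bb; split => //.
  exact: hBb n I.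
move=> A HA.
have mA : measurable A := (HA 0%N I).1.
have /choice [Bp hBp] : forall n, exists Bn : set X,
    B n Bn /\ p ((A `\` Bn) `|` (Bn `\` A)) = 0%E.
  by move=> n; have [_ ?] := HA n I.
pose U m := \bigcup_n Bp (n + m)%N.
pose C := \bigcap_m U m.
have hC : forall k, B k C.
  move=> k.
  have -> : C = \bigcap_m U (m + k)%N.
    apply/seteqP; split => x hx m _; first exact: hx.
    have [n _ hn] := hx m I; exists (n + k)%N => //.
    by rewrite -addnA (addnC k m).
  apply: sa_bigcap; first exact: (hB k).1.
  move=> m; have [_ _ GU] := (hB k).1; apply: (GU) => n.
  have := (hBp (n + (m + k))%N).1; rewrite addnA; exact: (@sa_mono _ B hmono k (n + m)%N).
have mC : measurable C := (hB 0%N).2 _ (hC 0%N).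
have mBp : forall n, measurable (Bp n) := fun n => (hB n).2 _ (hBp n).1.
split => //; exists C; split; first by move=> k _; exact: hC.
apply: measure_negligible.
  by apply: measurableU; apply: measurableD.
apply: (@negligibleS _ _ _ _ (\bigcup_n ((A `\` Bp n) `|` (Bp n `\` A)))).
  move=> x hx; apply: contrapT => hn.
  have hn' : forall n, Bp n x = A x.
    move=> n; apply/propext; split => h; apply: contrapT => h'; apply: hn;
      exists n => //; [right|left]; by split.
  case: hx => [[Ax nCx]|[Cx nAx]].
    by apply: nCx => m _; exists 0%N => //; rewrite hn'.
  by have [n _ hb] := Cx 0%N I; rewrite hn' in hb.
apply: negligible_bigcup => n; apply/negligibleP; last exact: (hBp n).2.
by apply: measurableU; apply: measurableD.
Qed.
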